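(* Let $A$ be a finite nonempty set and let $M\le A^{A}$ be a monoid (under composition, containing $\mathrm{id}_A$). Then $M^{*}$ is a preclone, i.e., $\mathrm{id}_A\in M^{*}$ and $M^{*}$ is closed under the operations $\zeta$, $\tau$ and $\circ$. Moreover, $M^{*}$ is closed under $\nabla$ if and only if $C\subseteq M$, where $C=\{\mathbf c_a\mid a\in A\}$ is the set of all constant unary maps $\mathbf c_a(x)=a$.
   Context: $\mathrm{Op}(A)$ denotes the set of all operations $f:A^n\to A$, $n\ge 1$. For $f\in\mathrm{Op}(A)$ of arity $n$, $i\in\{1,\dots,n\}$ and $\mathbf a=(a_1,\dots,a_{i-1},a_{i+1},\dots,a_n)\in A^{n-1}$, the translation $f_{\mathbf a,i}$ is the unary map $x\mapsto f(a_1,\dots,a_{i-1},x,a_{i+1},\dots,a_n)$; $\mathrm{trl}(f)$ is the set of all such translations (for unary $f$, $\mathrm{trl}(f)=\{f\}$). For $M\subseteq A^A$, $M^{*}:=\{f\in\mathrm{Op}(A)\mid \mathrm{trl}(f)\subseteq M\}$. For $f$ $n$-ary and $g$ $m$-ary: $(\zeta f)(x_1,\dots,x_n)=f(x_2,\dots,x_n,x_1)$ (and $\zeta f=f$ if $n=1$); $(\tau f)(x_1,x_2,x_3,\dots,x_n)=f(x_2,x_1,x_3,\dots,x_n)$ (and $\tau f=f$ if $n=1$); $(f\circ g)(x_1,\dots,x_{m+n-1})=f(g(x_1,\dots,x_m),x_{m+1},\dots,x_{m+n-1})$; $(\nabla f)(x_1,\dots,x_{n+1})=f(x_2,\dots,x_{n+1})$.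 A preclone is a subset of $\mathrm{Op}(A)$ containing $\mathrm{id}_A$ and closed under $\zeta,\tau,\circ$. *)

(* Defs.v *)
From mathcomp Require Import all_boot.
Set Implicit Arguments. Unset Strict Implicit. Unset Printing Implicit Defensive.

(* An operation on A of arity n >= 1 is stored with arity field n-1:
   its arguments are a finite function 'I_(n-1).+1 -> A (a tuple in A^n). *)
 
Record Op (A : finType) := mkOp {
  arity : nat;
  fn : {ffun 'I_arity.+1 -> A} -> A }.

Arguments arity {A} o.
Arguments fn {A} o _.

Section Ops.
Variable A : finType.

Definition idop : Op A := @mkOp A 0 (fun x => x ord0).

(* translation f_{a,i}: the i-th argument is the variable x, the others
   are taken from a (the i-th component of a is ignored) *)
Definition transl (f : Op A) (i : 'I_(arity f).+1)
    (a : {ffun 'I_(arity f).+1 -> A}) : {ffun A -> A} :=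
  [ffun x => fn f [ffun j => if j == i then x else a j]].

Definition star (M : {set {ffun A -> A}}) (f : Op A) : Prop :=
  forall (i : 'I_(arity f).+1) (a : {ffun 'I_(arity f).+1 -> A}),
    transl i a \in M.

(* zeta f (x_1,...,x_n) = f (x_2,...,x_n,x_1) ; identity when n = 1 *)
Definition zeta (f : Op A) : Op A :=
  @mkOp A (arity f) (fun x => fn f [ffun k => x (ordS k)]).

Definition swap01 (n : nat) (k : 'I_n.+1) : 'I_n.+1 :=
  if n is 0 then k
  else inord (if val k == 0 then 1 else if val k == 1 then 0 else val k).

Definition tau (f : Op A) : Op A :=
  @mkOp A (arity f) (fun x => fn f [ffun k => x (swap01 k)]).

(* (f o g)(x_1..x_{m+n-1}) = f (g (x_1..x_m), x_{m+1}, ..., x_{m+n-1});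
   with n = p+1, m = q+1 the result has arity q+p+1 *)
Definition comp (f g : Op A) : Op A :=
  @mkOp A (arity g + arity f) (fun x =>
    fn f [ffun k : 'I_(arity f).+1 =>
            if val k == 0
            then fn g [ffun j : 'I_(arity g).+1 => x (inord (val j))]
            else x (inord (arity g + val k))]).

Definition nabla (f : Op A) : Op A :=
  @mkOp A (arity f).+1 (fun x => fn f [ffun k => x (lift ord0 k)]).

Definition preclone (P : Op A -> Prop) : Prop :=
  [/\ P idop,
      (forall f, P f -> P (zeta f)),
      (forall f, P f -> P (tau f)) &
      (forall f g, P f -> P g -> P (comp f g))].

Definition nabla_closed (P : Op A -> Prop) : Prop :=
  forall f, P f -> P (nabla f).

Definition monoid_of_maps (M : {set {ffun A -> A}}) : Prop :=
  [ffun x => x] \in M /\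
  (forall f g, f \in M -> g \in M -> [ffun x => f (g x)] \in M).

End Ops.

(* Main.v *)
Require Import Defs.
From mathcomp Require Import all_boot.
From mathcomp Require Import zify.

Lemma ord_eqNE n (x y : 'I_n) : (x == y) = (nat_of_ord x == nat_of_ord y).
Proof. by []. Qed.

Lemma star_perm (A : finType) (M : {set {ffun A -> A}}) (f : Op A)
  (s : 'I_(arity f).+1 -> 'I_(arity f).+1) (hs : injective s) :
  star M f -> star M (@mkOp A (arity f) (fun x => fn f [ffun k => x (s k)])).
Proof.
move=> Hf i a.
have -> : transl (f := @mkOp A (arity f) (fun x => fn f [ffun k => x (s k)])) i a
   = transl (invF hs i) [ffun k => a (s k)].
  apply/ffunP => x; rewrite !ffunE /=; congr (fn f _); apply/ffunP => k.
  rewrite !ffunE.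
  have -> : (s k == i) = (k == invF hs i).
    apply/eqP/eqP => [<-|->]; [by rewrite invF_f | by rewrite f_invF].
  by case: (k == invF hs i).
exact: Hf.
Qed.

Lemma swap01_inj n : injective (@swap01 n).
Proof.
case: n => [//|n] i j; rewrite /swap01 => /(congr1 (@nat_of_ord _)).
have Hi := ltn_ord i; have Hj := ltn_ord j.
rewrite !inordK; try by (do 2 case: ifP => //); lia.
move=> E; apply/val_inj; move: E => /=.
case: (eqVneq (nat_of_ord i) 0) => Hi0; case: (eqVneq (nat_of_ord j) 0) => Hj0 //=;
case: (eqVneq (nat_of_ord i) 1) => Hi1; case: (eqVneq (nat_of_ord j) 1) => Hj1 //=; lia.
Qed.

Lemma star_zeta (A : finType) (M : {set {ffun A -> A}}) f :
  star M f -> star M (zeta f).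
Proof. apply: star_perm; apply: ordS_inj. Qed.

Lemma star_tau (A : finType) (M : {set {ffun A -> A}}) f :
  star M f -> star M (tau f).
Proof. apply: star_perm; apply: swap01_inj. Qed.

Lemma star_comp (A : finType) (M : {set {ffun A -> A}}) (HM : monoid_of_maps M) f g :
  star M f -> star M g -> star M (Defs.comp f g).
Proof.
move=> Hf Hg; rewrite /star /= => i a.
have Hi := ltn_ord i.
case: (leqP (nat_of_ord i) (arity g)) => Hiq.
- pose ag : {ffun 'I_(arity g).+1 -> A} := [ffun j => a (inord (nat_of_ord j))].
  pose af : {ffun 'I_(arity f).+1 -> A} := [ffun k => a (inord (arity g + nat_of_ord k))].
  have -> : transl (f := Defs.comp f g) i a =
     [ffun x => transl ord0 af (transl (inord (nat_of_ord i)) ag x)].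
    apply/ffunP => x; rewrite !ffunE /=; congr (fn f _); apply/ffunP => k.
    rewrite !ffunE.
    case: (eqVneq k ord0) => [->|Hk] /=.
      congr (fn g _); apply/ffunP => j; rewrite !ffunE.
      have Hj := ltn_ord j.
      have -> : (inord (nat_of_ord j) == i) = (j == inord (nat_of_ord i)).
        rewrite !ord_eqNE /= !inordK //; lia.
      done.
    have Hk0 : nat_of_ord k != 0 by move: Hk; rewrite !ord_eqNE.
    rewrite (negbTE Hk0).
    have Hk' := ltn_ord k.
    have -> : (inord (arity g + nat_of_ord k) == i) = false.
      apply/negbTE; rewrite !ord_eqNE /= inordK; lia.
    done.
  by apply: (proj2 HM); [apply: Hf | apply: Hg].
- pose c := fn g [ffun j : 'I_(arity g).+1 => a (inord (nat_of_ord j))].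
  pose af : {ffun 'I_(arity f).+1 -> A} :=
    [ffun k => if nat_of_ord k == 0 then c else a (inord (arity g + nat_of_ord k))].
  have -> : transl (f := Defs.comp f g) i a = transl (inord (nat_of_ord i - arity g)) af.
    apply/ffunP => x; rewrite !ffunE /=; congr (fn f _); apply/ffunP => k.
    rewrite !ffunE.
    have Hk' := ltn_ord k.
    case: (eqVneq (nat_of_ord k) 0) => Hk0 /=.
      have -> : (k == inord (nat_of_ord i - arity g)) = false.
        apply/negbTE; rewrite !ord_eqNE /= inordK; lia.
      congr (fn g _); apply/ffunP => j; rewrite !ffunE.
      have Hj := ltn_ord j.
      have -> : (inord (nat_of_ord j) == i) = false.
        apply/negbTE; rewrite !ord_eqNE /= inordK; lia.
      done.
    have -> : (inord (arity g + nat_of_ord k) == i) = (k == inord (nat_of_ord i - arity g)).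
      rewrite !ord_eqNE /= !inordK; lia.
    done.
  exact: Hf.
Qed.

Theorem proposition2p5 (A : finType) (HA : 0 < #|A|)
    (M : {set {ffun A -> A}}) (HM : monoid_of_maps M) :
  preclone (star M) /\
  (nabla_closed (star M) <-> (forall a : A, [ffun _ : A => a] \in M)).
Proof.
split.
  split.
  - move=> i a.
    have -> : transl (f := idop A) i a = [ffun x => x].
      by apply/ffunP => x; rewrite !ffunE /= ffunE ord1.
    exact: (proj1 HM).
  - exact: star_zeta.
  - exact: star_tau.
  - exact: star_comp.
split.
- move=> Hn b.
  have Hid : star M (idop A).
    move=> i a.
    have -> : transl (f := idop A) i a = [ffun x => x].
      by apply/ffunP => x; rewrite !ffunE /= ffunE ord1.
    exact: (proj1 HM).
  have := Hn _ Hid ord0 [ffun _ => b].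
  have -> : transl (f := nabla (idop A)) ord0 [ffun _ => b] = [ffun _ : A => b].
    by apply/ffunP => x; rewrite !ffunE /= !ffunE.
  done.
- move=> Hc f Hf i a.
  case: (unliftP ord0 i) => [i'|] ->.
  + have -> : transl (f := nabla f) (lift ord0 i') a
        = transl i' [ffun k => a (lift ord0 k)].
      apply/ffunP => x; rewrite !ffunE /=; congr (fn f _); apply/ffunP => k.
      by rewrite !ffunE (inj_eq (@lift_inj _ ord0)).
    exact: Hf.
  + have -> : transl (f := nabla f) ord0 a
        = [ffun _ : A => fn f [ffun k => a (lift ord0 k)]].
      apply/ffunP => x; rewrite !ffunE /=; congr (fn f _); apply/ffunP => k.
      by rewrite !ffunE eq_sym (negbTE (neq_lift _ _)).
    exact: Hc.
Qed.
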